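(* Let $\varepsilon>0$, $\gamma\in(0,1)$, and consider the tests $\tilde\psi^i_t=\mathbf 1\{E^i_t\ge N/\gamma\}$ with $\tilde\tau_{\boldsymbol\psi}=\min_i\inf\{t\ge1:\tilde\psi^i_t=1\}$, as in the context. For any $\mathbf s\in\tilde{\mathfrak S}(\mathbf w_{\mathbf v},\varepsilon)$, there exists a universal constant $C>0$ such that $$\mathbb E^{\mathbf s}[\tilde\tau_{\boldsymbol\psi}]\le\tilde\tau_\varepsilon=\frac{10\log(1/\gamma)}{\varepsilon^2}+C\,\frac{1+|\log\underline{\mathbf w_{\mathbf v}}|}{\varepsilon^5},$$ where $\underline{\mathbf w_{\mathbf v}}=\min_{i\in[N]}\min_{a\in\mathcal A^i}w^i_{\mathbf v}[a]$.
   Context: Repeated game with $N$ players, finite pure action sets $\mathcal A^i$ of size $K$; each round every player $i$ independently draws $A^i_t\sim s^i(h_t)$ where $s^i:\mathcal H\to\Delta(\mathcal A^i)$ maps public histories $h_t=(A_0,\dots,A_{t-1})$ of realized pure action profiles to mixed actions; $\mathcal S^i$ the set of such strategies; $\mathbb P^{\mathbf s},\mathbb E^{\mathbf s}$ the law/expectation induced by profile $\mathbf s$. A cooperative mixed profile $\mathbf w_{\mathbf v}=(w^1_{\mathbf v},\dots,w^N_{\mathbf v})$ is fixed. For each $i$, $a\in\mathcal A^i$: $N^i_t(a)=\sum_{s=0}^{t-1}\mathbf 1\{A^i_s=a\}$, $\hat w^i_t(a)=(N^i_t(a)+1)/(t+K)$, $E^i_t=\prod_{s=0}^t\hat w^i_s(A^i_s)/w^i_{\mathbf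 v}(A^i_s)$ ($c/0=+\infty$ for $c>0$). Stationary strategies $\tilde{\mathfrak S}^i=\{s\in\mathcal S^i:\exists\tilde w^i\in\Delta(\mathcal A^i),\ s(h_t)=\tilde w^i\ \forall t,h_t\}$, $\tilde{\mathfrak S}=\prod_i\tilde{\mathfrak S}^i$; $\mathsf B^i(\mathbf w_{\mathbf v},\varepsilon)=\{s\in\mathcal S^i:\|s(h_t)-w^i_{\mathbf v}\|_1\le2\varepsilon\ \forall t,h_t\}$; $\tilde{\mathfrak S}(\mathbf w_{\mathbf v},\varepsilon)=\{\mathbf s\in\tilde{\mathfrak S}:\exists i,\ s^i\in\tilde{\mathfrak S}^i\setminus\mathsf B^i(\mathbf w_{\mathbf v},\varepsilon)\}$. *)

(* Defs.v *)
From HB Require Import structures.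
From mathcomp Require Import all_boot all_order all_algebra.
From mathcomp Require Import all_classical all_reals all_analysis.
Set Implicit Arguments. Unset Strict Implicit. Unset Printing Implicit Defensive.
Import Order.TTheory GRing.Theory Num.Theory.
Local Open Scope ring_scope.

Section Game.
Variables (R : realType) (N K : nat).

Definition profile := {ffun 'I_N -> 'I_K}.
(* a public history h_t = (A_0,...,A_{t-1}) *)
Definition history := seq profile.
Definition mixed := {ffun 'I_K -> R}.

Definition is_dist (p : mixed) : Prop :=
  (forall a, 0 <= p a) /\ \sum_a p a = 1.

Definition strat_profile := 'I_N -> history -> mixed.

Fixpoint hist_prob_aux (s : strat_profile) (past : history) (h : history) : R :=
  match h with
  | [::] => 1
  | p :: h' => (\prod_i s i past (p i)) * hist_prob_aux s (rcons past p) h'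
  end.
Definition hist_prob (s : strat_profile) (h : history) : R := hist_prob_aux s [::] h.

Definition what (i : 'I_N) (past : history) (a : 'I_K) : R :=
  (count (fun q : profile => q i == a) past + 1)%:R / (size past + K)%:R.

Fixpoint Eprod_aux (w : 'I_N -> mixed) (i : 'I_N) (past h : history) : R :=
  match h with
  | [::] => 1
  | p :: h' => (what i past (p i) / w i (p i)) * Eprod_aux w i (rcons past p) h'
  end.

(* E^i_t computed on the history (A_0,...,A_t) (length t+1);
   convention c/0 = +oo (hat w > 0 always), so E = +oo as soon as some
   A^i_s has w^i(A^i_s) = 0 *)
Definition Estat (w : 'I_N -> mixed) (i : 'I_N) (g : history) : \bar R :=
  if has (fun p : profile => w i (p i) == 0) g then +oo%E
  else (Eprod_aux w i [::] g)%:E.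

Definition test_fires (w : 'I_N -> mixed) (gamma : R) (i : 'I_N) (u : nat)
    (h : history) : bool :=
  ((N%:R / gamma)%:E <= Estat w i (take u.+1 h))%E.

(* event {tau > t}: no test fired at any time 1 <= u <= t, for any player;
   it depends only on A_0..A_t *)
Definition no_stop_by (w : 'I_N -> mixed) (gamma : R) (t : nat) (h : history) : bool :=
  [forall i : 'I_N, forall u : 'I_t.+1, (0 < (u : nat))%N ==> ~~ test_fires w gamma i u h].

Definition prob_tau_gt (s : strat_profile) (w : 'I_N -> mixed) (gamma : R) (t : nat) : R :=
  \sum_(h : (t.+1).-tuple profile)
     (if no_stop_by w gamma t h then hist_prob s h else 0).

(* E^s[tau] for the N u {+oo}-valued stopping time, via E[tau] = sum_t P(tau > t) *)
Definition expected_tau (s : strat_profile) (w : 'I_N -> mixed) (gamma : R) : \bar R :=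
  (\sum_(0 <= t <oo) (prob_tau_gt s w gamma t)%:E)%E.

Definition stationary (si : history -> mixed) : Prop :=
  exists wt : mixed, is_dist wt /\ forall h, si h = wt.

Definition in_ball (w : 'I_N -> mixed) (eps : R) (i : 'I_N) (si : history -> mixed) : Prop :=
  forall h, \sum_a `|si h a - w i a| <= 2 * eps.

Definition dev_stationary (w : 'I_N -> mixed) (eps : R) (s : strat_profile) : Prop :=
  (forall i, stationary (s i)) /\ exists i, ~ in_ball w eps i (s i).

(* underline w_v = min_i min_a w^i[a]  (entries are <= 1, so 1 is a neutral seed) *)
Definition wmin (w : 'I_N -> mixed) : R :=
  \big[Num.min/1]_(i < N) \big[Num.min/1]_(a < K) w i a.

(* tilde tau_eps; equals +oo when underline w = 0 since |log 0| = +oo *)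
Definition tau_eps_bound (C eps gamma : R) (w : 'I_N -> mixed) : \bar R :=
  if wmin w == 0 then +oo%E
  else ((10 * ln (1 / gamma)) / eps ^+ 2
        + C * (1 + `|ln (wmin w)|) / eps ^+ 5)%:E.

End Game.

(* Main.v *)
Require Import Defs.
From HB Require Import structures.
From mathcomp Require Import all_boot all_order all_algebra.
From mathcomp Require Import all_classical all_reals all_analysis.
From mathcomp Require Import ring lra zify.
Import Order.TTheory GRing.Theory Num.Theory.
Local Open Scope ring_scope.

Lemma multinom (R : realType) (K : nat) (p : 'I_K -> R) :
  (forall a, 0 <= p a) -> \sum_a p a <= 1 ->
  forall c : 'I_K -> nat,
  ((\sum_a c a)`!)%:R * \prod_a p a ^+ c a <= \prod_a ((c a)`!)%:R :> R.
Proof.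
move=> p0 p1 c.
suff H : forall n (c : 'I_K -> nat), (\sum_a c a)%N = n ->
  (n`!)%:R * \prod_a p a ^+ c a <= \prod_a ((c a)`!)%:R :> R.
  exact: H.
elim=> [|n IH] {}c Hs.
  have c0 a : c a = 0%N.
    apply/eqP; rewrite -leqn0 -Hs (bigD1 a) //=; exact: leq_addr.
  rewrite (eq_bigr (fun _ => 1)); last by move=> a _; rewrite c0.
  rewrite [in X in _ <= X](eq_bigr (fun _ => 1)); last by move=> a _; rewrite c0.
  by rewrite big1_eq mulr1.
have step : forall a, (c a)%:R * ((n`!)%:R * \prod_b p b ^+ c b)
                <= p a * \prod_b ((c b)`!)%:R :> R.
  move=> a; case Hca: (c a) => [|k].
    rewrite mul0r; apply: mulr_ge0 => //; apply: prodr_ge0 => b _; exact: ler0n.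
  pose c' := fun b => if b == a then k else c b.
  have Hs' : (\sum_b c' b)%N = n.
    move: Hs; rewrite (bigD1 a) //= Hca addSn => -[] <-.
    rewrite (bigD1 a) //= /c' eqxx; congr (_ + _)%N.
    by apply: eq_bigr => b /negPf ->.
  have := IH c' Hs'.
  have -> : \prod_b p b ^+ c b = p a * \prod_b p b ^+ c' b.
    rewrite (bigD1 a) //= [in RHS](bigD1 a) //= /c' eqxx Hca exprS mulrA.
    congr (_ * _); apply: eq_bigr => b /negPf ->; done.
  have -> : \prod_b ((c b)`!)%:R = (k.+1)%:R * \prod_b ((c' b)`!)%:R :> R.
    rewrite (bigD1 a) //= [in RHS](bigD1 a) //= /c' eqxx Hca factS natrM mulrA.
    congr (_ * _); apply: eq_bigr => b /negPf ->; done.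
  move=> Hle.
  have pa := p0 a.
  have h0 : 0 <= (k.+1)%:R * p a :> R by apply: mulr_ge0.
  have := ler_wpM2l h0 Hle.
  move=> H.
  rewrite [X in X <= _](_ : _ = (k.+1)%:R * p a * ((n`!)%:R * \prod_b p b ^+ c' b)); last by ring.
  by rewrite [X in _ <= X](_ : _ = (k.+1)%:R * p a * \prod_b ((c' b)`!)%:R); last by ring.
have eq1 : ((n.+1)`!)%:R * \prod_a p a ^+ c a
    = \sum_a (c a)%:R * ((n`!)%:R * \prod_b p b ^+ c b) :> R.
  by rewrite -big_distrl /= -natr_sum Hs factS natrM mulrA.
rewrite eq1; apply: le_trans (ler_sum _ (fun a _ => step a)) _.
rewrite -big_distrl /=.
have hp : 0 <= \prod_b ((c b)`!)%:R :> R by apply: prodr_ge0 => b _; exact: ler0n.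
by rewrite -[X in _ <= X]mul1r; apply: ler_wpM2r.
Qed.
Lemma bern_nat a K : (a ^ K * (a + K) <= (a + 1) ^ K * a)%N.
Proof.
elim: K => [|K IH]; first by rewrite !expn0 addn0.
have H2 : (a ^ K <= (a + 1) ^ K)%N.
  by case: K {IH} => [|K]; rewrite ?expn0 // leq_exp2r // leq_addr.
rewrite !expnS.
move: IH H2; move: (a ^ K)%N ((a+1) ^ K)%N => X Y IH H2.
nia.
Qed.

Lemma prod_binom_le n K :
  (\prod_(k < n) (k + K) <= (n + 1) ^ K * n`!)%N.
Proof.
elim: n => [|n IH]; first by rewrite big_ord0 fact0 add0n exp1n.
rewrite big_ord_recr /= factS.
have B := bern_nat (n + 1) K.
have -> : (n.+1 + 1 = (n + 1) + 1)%N by rewrite !addn1.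
move: IH B; move: (\prod_(k < n) (k + K))%N ((n+1)^K)%N (((n+1)+1)^K)%N (n`!) => P X Y F IH B.
nia.
Qed.

Lemma sum_tuple_prod (R : realType) (T : finType) (F : T -> R) n :
  \sum_(h : n.-tuple T) \prod_(q <- h) F q = (\sum_q F q) ^+ n.
Proof.
rewrite (reindex (@tuple_of_finfun T n)); last first.
  by exists finfun_of_tuple => x _; [rewrite tuple_of_finfunK|rewrite finfun_of_tupleK].
under eq_bigr => f _ do rewrite big_tuple /= big_mkcond /=.
have -> : (\sum_q F q) ^+ n = \prod_(k < n) \sum_q F q by rewrite prodr_const card_ord.
rewrite bigA_distr_bigA /=; apply: eq_bigr => f _.
by apply: eq_bigr => k _; rewrite tnth_map tnth_ord_tuple.
Qed.

Section Comb.
Variables (R : realType) (N K : nat) (w : 'I_N -> mixed R K) (i : 'I_N).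

Definition cnt (a : 'I_K) (h : history N K) : nat := count (fun q : profile N K => q i == a) h.

Lemma fact_rcons (past : history N K) (q : profile N K) :
  \prod_a ((cnt a (rcons past q))`!)%:R =
  (cnt (q i) past).+1%:R * \prod_a ((cnt a past)`!)%:R :> R.
Proof.
rewrite (bigD1 (q i)) //= [in RHS](bigD1 (q i)) //= mulrA.
congr (_ * _).
  by rewrite /cnt -cats1 count_cat /= eqxx addn0 addn1 factS natrM.
apply: eq_bigr => a /negPf Ha; rewrite /cnt -cats1 count_cat /=.
by rewrite eq_sym Ha !addn0.
Qed.

Lemma Eprod_fact (past h : history N K) : (0 < K)%N -> (forall a, 0 < w i a) ->
  Eprod_aux w i past h * \prod_(q <- h) w i (q i)
   * \prod_(k < size h) (size past + k + K)%:R * \prod_a ((cnt a past)`!)%:R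
  = \prod_a ((cnt a (past ++ h))`!)%:R :> R.
Proof.
move=> K0 wpos; elim: h past => [|q h IH] past /=.
  by rewrite big_nil big_ord0 cats0 !mul1r.
rewrite -cat_rcons -(IH (rcons past q)) fact_rcons big_cons big_ord_recl /=.
rewrite size_rcons.
have -> : \prod_(k < size h) (size past + (bump 0 k) + K)%:R =
          \prod_(k < size h) ((size past).+1 + k + K)%:R :> R.
  by apply: eq_bigr => k _; rewrite /bump /= add1n addnS addSn.
rewrite /what.
have wq : w i (q i) != 0 by rewrite gt_eqF.
have sK : (size past + 0 + K)%:R != 0 :> R.
  by rewrite pnatr_eq0 -lt0n addn0; apply: ltn_addl.
rewrite addn0 in sK *.
rewrite /cnt.
field.
by rewrite wq -natrD sK.
Qed.

Lemma sum_cnt (h : history N K) : (\sum_a cnt a h)%N = size h.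
Proof.
elim: h => [|q h IH] /=; first by rewrite big1.
rewrite -IH /cnt /= big_split /= (bigD1 (q i)) //= eqxx big1 ?add0n //.
by move=> a /negPf; rewrite eq_sym => ->.
Qed.

Lemma prod_cnt (p : 'I_K -> R) (h : history N K) :
  \prod_(q <- h) p (q i) = \prod_a p a ^+ cnt a h.
Proof.
elim: h => [|q h IH] /=; first by rewrite big_nil big1.
rewrite big_cons IH /cnt /=.
under [in RHS]eq_bigr do rewrite exprD.
rewrite big_split /=; congr (_ * _).
rewrite (bigD1 (q i)) //= eqxx big1 ?mulr1 ?expr1 //.
by move=> a /negPf; rewrite eq_sym => ->.
Qed.

Lemma Eprod_lower (p : 'I_K -> R) (h : history N K) : (0 < K)%N -> (forall a, 0 < w i a) ->
  (forall a, 0 <= p a) -> \sum_a p a <= 1 ->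
  ((size h)`!)%:R * \prod_(q <- h) p (q i) <=
  Eprod_aux w i [::] h * \prod_(q <- h) w i (q i) * \prod_(k < size h) (k + K)%:R.
Proof.
move=> K0 wpos p0 p1.
have := Eprod_fact [::] h K0 wpos.
rewrite [X in _ * X = _]big1; last by move=> a _; rewrite /cnt.
rewrite mulr1 /= => ->.
rewrite prod_cnt -{1}sum_cnt; exact: multinom.
Qed.
End Comb.
Section Game2.
Variables (R : realType) (N K : nat) (w wt : 'I_N -> mixed R K) (i : 'I_N).
Hypothesis K0 : (0 < K)%N.
Hypothesis wpos : forall a, 0 < w i a.
Hypothesis wt0 : forall j a, 0 <= wt j a.
Hypothesis wt1 : forall j, \sum_a wt j a = 1.

Definition g j a := if j == i then Num.sqrt (wt i a * w i a) else wt j a.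

Lemma point (c : R) (h : history N K) : 0 < c ->
  (if (Estat w i h < c%:E)%E then \prod_(q <- h) \prod_j wt j (q j) else 0)
  <= Num.sqrt (c * ((size h + 1) ^ K)%N%:R) * \prod_(q <- h) \prod_j g j (q j).
Proof.
move=> c0.
set Ph := \prod_(q <- h) wt i (q i).
set Wh := \prod_(q <- h) w i (q i).
set Rh := \prod_(q <- h) \prod_(j | j != i) wt j (q j).
set S := \prod_(q <- h) Num.sqrt (wt i (q i) * w i (q i)).
have e1 : \prod_(q <- h) \prod_j wt j (q j) = Ph * Rh.
  by rewrite -big_split; apply: eq_bigr => q _; rewrite (bigD1 i).
have e2 : \prod_(q <- h) \prod_j g j (q j) = S * Rh.
  rewrite -big_split; apply: eq_bigr => q _; rewrite (bigD1 i) //= /g eqxx.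
  by congr (_ * _); apply: eq_bigr => j /negPf ->.
have Rh0 : 0 <= Rh by apply: prodr_ge0 => q _; apply: prodr_ge0.
have S0 : 0 <= S by apply: prodr_ge0 => q _; apply: sqrtr_ge0.
have Ph0 : 0 <= Ph by apply: prodr_ge0.
have Wh0 : 0 < Wh by apply: prodr_gt0.
have SS : S ^+ 2 = Ph * Wh.
  rewrite /S -prodrXl -big_split; apply: eq_bigr => q _.
  by rewrite sqr_sqrtr // mulr_ge0 // ltW.
have x0 := sqrtr_ge0 (c * ((size h + 1) ^ K)%N%:R).
case: ifP => HE; rewrite e2; last by rewrite mulr_ge0 // mulr_ge0.
rewrite e1.
have hasF : has (fun p : profile N K => w i (p i) == 0) h = false.
  by apply/hasPn => q _; rewrite gt_eqF.
rewrite /Estat hasF lte_fin in HE.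
set n := size h in x0 *.
have wt1' : \sum_a wt i a <= 1 by rewrite wt1.
have L := @Eprod_lower R N K w i (wt i) h K0 wpos (wt0 i) wt1'.
have D := prod_binom_le n K.
rewrite -/n -/Ph -/Wh in L.
move: D; rewrite -(ler_nat R) natrM natr_prod => D.
move: L D HE x0.
set E := Eprod_aux _ _ _ _. set Dn := \prod_(k < n) _.
set G := ((n + 1) ^ K)%N%:R. set F := (n`!)%:R => L D HE x0.
have F0 : 0 < F by rewrite ltr0n fact_gt0.
have Dn0 : 0 <= Dn by apply: prodr_ge0 => k _; apply: ler0n.
have G0 : 0 <= G by apply: ler0n.
have H1 : E * Wh * Dn <= c * Wh * Dn.
  by apply: ler_wpM2r => //; apply: ler_wpM2r; [apply: ltW|apply: ltW].
have H2 : c * Wh * Dn <= c * Wh * (G * F).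
  by apply: ler_wpM2l => //; apply: mulr_ge0; apply: ltW.
have H3 : F * Ph <= F * (c * G * Wh).
  apply: le_trans L _; apply: le_trans H1 _; apply: le_trans H2 _.
  by rewrite le_eqVlt; apply/orP; left; apply/eqP; ring.
rewrite ler_pM2l // in H3.
have xx : Num.sqrt (c * G) ^+ 2 = c * G by rewrite sqr_sqrtr // mulr_ge0 // ltW.
suff HP : Ph <= Num.sqrt (c * G) * S.
  by rewrite mulrA; apply: ler_wpM2r.
move: xx H3 SS x0 S0 Ph0 Wh0; move: (Num.sqrt (c * G)) => x xx H3 SS x0 S0 Ph0 Wh0.
have HH : Ph * Ph <= (x * S) ^+ 2.
  rewrite exprMn xx SS.
  have := ler_wpM2r Ph0 H3.
  move=> HH; apply: le_trans HH _; rewrite le_eqVlt; apply/orP; left; apply/eqP; ring.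
have y0 : 0 <= x * S by apply: mulr_ge0.
move: HH y0; rewrite expr2; move: (x * S) => y HH y0.
nra.
Qed.

Lemma sum_prof_g : \sum_(q : profile N K) \prod_j g j (q j) = \sum_a Num.sqrt (wt i a * w i a).
Proof.
rewrite -(bigA_distr_bigA (fun j a => g j a)) /= (bigD1 i) //= [X in _ * X]big1 ?mulr1.
  by apply: eq_bigr => a _; rewrite /g eqxx.
by move=> j /negPf Hj; under eq_bigr do rewrite /g Hj; rewrite wt1.
Qed.

Lemma sum_prof_wt : \sum_(q : profile N K) \prod_j wt j (q j) = 1.
Proof.
rewrite -(bigA_distr_bigA (fun j a => wt j a)) /=.
by rewrite big1 // => j _; rewrite wt1.
Qed.

Variable s : strat_profile R N K.
Hypothesis Hs : forall j h, s j h = wt j.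

Lemma hist_stat h : hist_prob s h = \prod_(q <- h) \prod_j wt j (q j).
Proof.
rewrite /hist_prob; elim: h [::] => [|q h IH] past /=; first by rewrite big_nil.
by rewrite big_cons IH; under eq_bigr do rewrite Hs.
Qed.

Lemma prob_le1 gamma t : prob_tau_gt s w gamma t <= 1.
Proof.
rewrite /prob_tau_gt.
apply: le_trans (_ : \sum_(h : t.+1.-tuple (profile N K)) \prod_(q <- h) \prod_j wt j (q j) <= 1).
  apply: ler_sum => h _; rewrite hist_stat; case: ifP => _ //.
  by apply: prodr_ge0 => q _; apply: prodr_ge0.
by rewrite sum_tuple_prod sum_prof_wt expr1n.
Qed.

Lemma prob_le_rho gamma t : 0 < gamma -> (0 < N)%N -> (0 < t)%N ->
  prob_tau_gt s w gamma t <=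
  Num.sqrt (N%:R / gamma * ((t.+1 + 1) ^ K)%N%:R) * (\sum_a Num.sqrt (wt i a * w i a)) ^+ t.+1.
Proof.
move=> g0 N0 t0.
have c0 : 0 < N%:R / gamma :> R by apply: divr_gt0 => //; rewrite ltr0n.
rewrite /prob_tau_gt -sum_prof_g -sum_tuple_prod big_distrr /=.
apply: ler_sum => h _.
apply: le_trans (_ : (if (Estat w i h < (N%:R / gamma)%:E)%E then \prod_(q <- h) \prod_j wt j (q j) else 0) <= _).
  case: ifP => Hn; last by case: ifP => _ //; apply: prodr_ge0 => q _; apply: prodr_ge0.
  rewrite hist_stat.
  have : ~~ test_fires w gamma i t h.
    move/forallP: Hn => /(_ i) /forallP /(_ ord_max) /implyP; apply => /=.
    done.
  rewrite /test_fires -{1}(size_tuple h) take_size -ltNge => -> //.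
by have := point (N%:R / gamma) h c0; rewrite size_tuple.
Qed.

End Game2.
Lemma term_ineq (R : realType) (eps x y : R) : 0 <= x -> 0 <= y ->
  eps * `|x - y| <= x + y - 2 * Num.sqrt (x * y) + eps ^+ 2 / 4 * (x + y + 2 * Num.sqrt (x * y))
  /\ Num.sqrt (x * y) <= (x + y) / 2.
Proof.
move=> x0 y0.
rewrite sqrtrM //.
have ex : x = Num.sqrt x ^+ 2 by rewrite sqr_sqrtr.
have ey : y = Num.sqrt y ^+ 2 by rewrite sqr_sqrtr.
have a0 := sqrtr_ge0 x; have b0 := sqrtr_ge0 y.
move: ex ey a0 b0; set a := Num.sqrt x; set b := Num.sqrt y => ex ey a0 b0.
clearbody a b; rewrite ex ey.
split; last by have := sqr_ge0 (a - b); nra.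
case: (lerP b a) => hab.
  rewrite ger0_norm; last by nra.
  have := sqr_ge0 ((a - b) - eps * (a + b) / 2); nra.
rewrite ler0_norm; last by nra.
have := sqr_ge0 ((b - a) - eps * (a + b) / 2); nra.
Qed.

Lemma rho_bound (R : realType) (K : nat) (p q : 'I_K -> R) (eps : R) :
  (forall a, 0 <= p a) -> (forall a, 0 <= q a) -> \sum_a p a = 1 -> \sum_a q a = 1 ->
  0 < eps -> 2 * eps < \sum_a `|p a - q a| ->
  \sum_a Num.sqrt (p a * q a) <= 1 - eps ^+ 2 / 2.
Proof.
move=> p0 q0 p1 q1 e0 Hd.
have H1 : eps * \sum_a `|p a - q a| <=
   \sum_a (p a + q a - 2 * Num.sqrt (p a * q a) + eps ^+ 2 / 4 * (p a + q a + 2 * Num.sqrt (p a * q a))).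
  by rewrite big_distrr /=; apply: ler_sum => a _; case: (@term_ineq R eps _ _ (p0 a) (q0 a)).
have H2 : \sum_a Num.sqrt (p a * q a) <= \sum_a (p a + q a) / 2.
  by apply: ler_sum => a _; case: (@term_ineq R eps _ _ (p0 a) (q0 a)).
rewrite -mulr_suml big_split /= p1 q1 in H2.
rewrite [X in _ <= X](eq_bigr (fun a => (1 + eps ^+ 2 / 4) * p a + (1 + eps ^+ 2 / 4) * q a
   + (eps ^+ 2 / 2 - 2) * Num.sqrt (p a * q a))) in H1; first last.
  by move=> a _; field.
rewrite !big_split /= -!big_distrr /= p1 q1 in H1.
move: H1 H2 Hd; set rho := \sum_a _; set D := \sum_a _ => H1 H2 Hd.
nra.
Qed.
Section NumB.
Variable R : realType.

Lemma expR_sq (v : R) : 0 <= v -> v ^+ 2 / 4 <= expR v.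
Proof.
move=> v0.
have -> : expR v = expR (v / 2) ^+ 2 by rewrite -expRM_natl; congr expR; field.
have h := expR_ge1Dx (v / 2).
have h2 : 0 <= 1 + v / 2 by lra.
have : (1 + v / 2) ^+ 2 <= expR (v / 2) ^+ 2.
  by rewrite ler_pXn2r // ?nnegrE // (le_trans h2 h).
move=> H; apply: le_trans H; nra.
Qed.

Lemma geom_sum (x : R) T : 0 <= x < 1 -> \sum_(t < T) x ^+ t <= (1 - x)^-1.
Proof.
move=> /andP [x0 x1].
have E : (1 - x) * \sum_(t < T) x ^+ t = 1 - x ^+ T.
  elim: T => [|T IH]; first by rewrite big_ord0 expr0; ring.
  by rewrite big_ord_recr /= mulrDr IH exprS; ring.
have hx : 0 < 1 - x by lra.
rewrite -(ler_pM2l hx) E mulrV ?unitf_gt0 //.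
have := exprn_ge0 T x0; lra.
Qed.

Lemma ind_sum (A : R) T : 0 <= A ->
  \sum_(t < T) (if (t.+1%:R < A) then 1 else 0) <= A.
Proof.
move=> A0; elim: T => [|T IH]; first by rewrite big_ord0.
rewrite big_ord_recr /=; case: ifP => H; last by rewrite addr0.
have : \sum_(t < T) (if (t.+1%:R < A) then 1 else 0) <= T%:R :> R.
  apply: le_trans (_ : \sum_(t < T) (1 : R) <= _).
    by apply: ler_sum => t _; case: ifP.
  by rewrite sumr_const card_ord.
move: H; rewrite -natr1 => H H2; lra.
Qed.


Lemma tail_bound (u : nat -> R) (c rho eps : R) (K : nat) :
  0 < eps -> eps < 1 -> 1 <= c -> 0 <= rho -> rho <= 1 - eps ^+ 2 / 2 ->
  (forall t, u t <= 1) ->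
  (forall t, (0 < t)%N -> u t <= Num.sqrt (c * ((t.+1 + 1) ^ K)%N%:R) * rho ^+ t.+1) ->
  forall T, \sum_(t < T) u t <=
    4 * ln c / eps ^+ 2 + 128 * (K ^ 2)%N%:R / eps ^+ 4 + 1 + 4 / eps ^+ 2.
Proof.
move=> e0 e1 c1 r0 r1 u1 ur T.
have c0 : 0 < c by apply: (lt_le_trans ltr01 c1).
have lc0 : 0 <= ln c by apply: ln_ge0.
have e2 : 0 < eps ^+ 2 by apply: exprn_gt0.
have e4 : 0 < eps ^+ 4 by apply: exprn_gt0.
set A := 4 * ln c / eps ^+ 2 + 128 * (K ^ 2)%N%:R / eps ^+ 4.
have A0 : 0 <= A.
  by rewrite /A addr_ge0 // divr_ge0 ?mulr_ge0 ?ler0n // ltW.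
set v := eps ^+ 2 / 4.
have v0 : 0 < v by rewrite /v divr_gt0.
set x := expR (- v).
have x0 : 0 < x by apply: expR_gt0.
have xv : x * (1 + v) <= 1.
  have := expR_ge1Dx v; have := expRxMexpNx_1 v; rewrite -/x => E H.
  move: E H; move: (expR v) => y E H; nra.
have x1 : x < 1 by nra.
have pt : forall t, u t <= (if (t.+1%:R < A) then 1 else 0) + x ^+ t.
  move=> t; case: ifP => HA.
    apply: le_trans (u1 t) _; have := exprn_ge0 t (ltW x0); lra.
  rewrite add0r.
  case: t HA => [|t] HA; first by rewrite expr0.
  set n := t.+2 in HA *.
  apply: le_trans (ur t.+1 isT) _.
  have nA : A <= n%:R by rewrite leNgt HA.
  set m := n%:R in nA *.
  have m1 : 1 <= m by rewrite /m ler1n.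
  have T1 : 0 <= 4 * ln c / eps ^+ 2 by rewrite divr_ge0 ?mulr_ge0 // ltW.
  have T2 : 0 <= 128 * (K ^ 2)%N%:R / eps ^+ 4 :> R by rewrite divr_ge0 ?mulr_ge0 ?ler0n // ltW.
  have hc : c <= expR (eps ^+ 2 * m / 4).
    rewrite -{1}(lnK (_ : c \in Num.pos)); last by rewrite posrE.
    rewrite ler_expR.
    have : 4 * ln c / eps ^+ 2 <= m by rewrite /A in nA; lra.
    rewrite ler_pdivrMr // => H; lra.
  have hG : ((n + 1) ^ K)%N%:R <= expR (eps ^+ 2 * m / 4).
    have em0 : 0 <= eps ^+ 2 * m / 4 by rewrite divr_ge0 // mulr_ge0 // ?(ltW e2); lra.
    case: (posnP K) => [K0|Kp].
      by rewrite K0 expn0; apply: le_trans (expR_ge1Dx _); lra.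
    set k : R := K%:R.
    have k0 : 0 < k by rewrite /k ltr0n.
    set y := eps ^+ 2 * m / (4 * k).
    have y0 : 0 <= y by rewrite /y divr_ge0 // ?mulr_ge0 ?(ltW e2) //; lra.
    have -> : eps ^+ 2 * m / 4 = K%:R * y by rewrite /y -/k; field; rewrite gt_eqF.
    rewrite expRM_natl natrX natrD -/m ler_pXn2r ?nnegrE ?expR_ge0 //; last by lra.
    apply: le_trans _ (expR_sq y y0).
    have H128 : 128 * k ^+ 2 <= m * eps ^+ 4.
      have : 128 * (K ^ 2)%N%:R / eps ^+ 4 <= m by rewrite /A in nA; lra.
      by rewrite ler_pdivrMr // natrX -/k.
    have Y : y ^+ 2 / 4 * (64 * k ^+ 2) = (m * eps ^+ 4) * m.
      by rewrite /y; field; rewrite gt_eqF.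
    have kk0 : 0 < 64 * k ^+ 2 by rewrite mulr_gt0 // exprn_gt0.
    rewrite -(ler_pM2r kk0) Y.
    move: H128 kk0; move: (m * eps ^+ 4) (k ^+ 2) => z kk H128 kk0.
    nra.
  have hr : rho ^+ n <= expR (m * - (eps ^+ 2 / 2)).
    rewrite /m expRM_natl ler_pXn2r // ?nnegrE ?expR_ge0 //.
    by apply: le_trans r1 _; have := expR_ge1Dx (- (eps ^+ 2 / 2)); lra.
  apply: le_trans (_ : x ^+ n <= _); last first.
    rewrite /n exprS; have := exprn_ge0 t.+1 (ltW x0); nra.
  have hcG : 0 <= c * ((n + 1) ^ K)%N%:R by rewrite mulr_ge0 ?ler0n // ltW.
  have a0 : 0 <= Num.sqrt (c * ((n + 1) ^ K)%N%:R) * rho ^+ n.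
    by rewrite mulr_ge0 ?sqrtr_ge0 ?exprn_ge0.
  have b0 : 0 <= x ^+ n by rewrite exprn_ge0 // ltW.
  rewrite -(ler_pXn2r (_ : (0 < 2)%N)) ?nnegrE //.
  rewrite exprMn sqr_sqrtr //.
  have hx2 : (x ^+ n) ^+ 2 = expR (m * - (eps ^+ 2 / 2)) *
      expR (eps ^+ 2 * m / 4) * expR (eps ^+ 2 * m / 4) * expR (m * - (eps ^+ 2 / 2)).
    rewrite /x -expRM_natl -expRM_natl -!expRD -/m; congr expR; by rewrite /v; field.
  rewrite hx2.
  move: hc hG hr; set E1 := expR (m * _); set Ec := expR (_ * m / 4) => hc hG hr.
  have -> : E1 * Ec * Ec * E1 = (Ec * Ec) * (E1 ^+ 2) by ring.
  have r2 : 0 <= rho ^+ n by apply: exprn_ge0.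
  have G0 : 0 <= ((n + 1) ^ K)%N%:R :> R by apply: ler0n.
  have H1 : c * ((n + 1) ^ K)%N%:R <= Ec * Ec by apply: ler_pM => //; apply: ltW.
  have H2 : (rho ^+ n) ^+ 2 <= E1 ^+ 2.
    by rewrite ler_pXn2r ?nnegrE // (le_trans r2 hr).
  have := ler_pM hcG (exprn_ge0 2 r2) H1 H2.
  by rewrite -/n.

apply: le_trans (_ : \sum_(t < T) ((if (t.+1%:R < A) then 1 else 0) + x ^+ t) <= _).
  by apply: ler_sum => t _; apply: pt.
rewrite big_split /=.
have H1 := ind_sum A T A0.
have H2 : \sum_(t < T) x ^+ t <= (1 - x)^-1 by apply: geom_sum; rewrite (ltW x0) x1.
have H3 : (1 - x)^-1 <= 1 + 4 / eps ^+ 2.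
  have hx : 0 < 1 - x by lra.
  have : (1 - x) * (1 + 4 / eps ^+ 2) >= 1.
    have -> : 4 / eps ^+ 2 = v^-1 by rewrite /v invf_div.
    have hv : v * v^-1 = 1 by rewrite mulfV // gt_eqF.
    have hv0 : 0 < v^-1 by rewrite invr_gt0.
    have h1 := ler_wpM2r (ltW hv0) xv.
    have h2 : x * v * v^-1 = x by rewrite -mulrA hv mulr1.
    move: h1 h2 hv0; move: (v^-1) => w h1 h2 hv0.
    nra.
  move=> H; rewrite -[X in X <= _]mulr1; apply: le_trans (ler_wpM2l _ H) _.
    by rewrite invr_ge0 ltW.
  by rewrite mulrA mulVf ?gt_eqF // mul1r.
lra.
Qed.
End NumB.
Theorem mainTheorem5 (R : realType) (N K : nat) :
  exists C : R, 0 < C /\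
  forall (w : 'I_N -> mixed R K) (eps gamma : R) (s : strat_profile R N K),
    (forall i, is_dist (w i)) ->
    0 < eps -> 0 < gamma -> gamma < 1 ->
    dev_stationary w eps s ->
    (expected_tau s w gamma <= tau_eps_bound C eps gamma w)%E.
Proof.
set C : R := 4 * `|ln (N%:R : R)| + 128 * (K ^ 2)%N%:R + 5.
have C0 : 0 < C by rewrite /C; have := normr_ge0 (ln (N%:R : R)); have := ler0n R (K ^ 2)%N; lra.
exists C; split => // w eps gamma s Hw e0 g0 g1 [Hstat [i Hi]].
rewrite /tau_eps_bound; case: ifP => Hwm; first by rewrite leey.
have N0 : (0 < N)%N by apply: (leq_ltn_trans (leq0n i) (ltn_ord i)).
have K0 : (0 < K)%N.
  case: (posnP K) => // K0; have := (Hw i).2; subst K; rewrite big_ord0 => /eqP.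
  by rewrite eq_sym oner_eq0.
have w0 : forall a, 0 <= w i a by move=> a; exact: (Hw i).1.
have wmin_ge0 : 0 <= wmin w.
  apply: (big_ind (fun x : R => 0 <= x)) => //= [x y hx hy|j _]; first by rewrite le_min hx hy.
  apply: (big_ind (fun x : R => 0 <= x)) => //= [x y hx hy|a _]; first by rewrite le_min hx hy.
  exact: (Hw j).1.
have wpos : forall a, 0 < w i a.
  move=> a; rewrite lt_def w0 andbT; apply/negP => /eqP wa.
  have : wmin w <= w i a.
    rewrite /wmin (bigD1 i) //= (bigD1 a) //= ge_min; apply/orP; left.
    by rewrite ge_min lexx.
  rewrite wa => H; move/negbT: Hwm; apply/negP; rewrite negbK eq_le H wmin_ge0.
  done.
pose wt j := s j [::].
have Hs : forall j h, s j h = wt j.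
  move=> j h; have [v [_ Hv]] := Hstat j; by rewrite /wt !Hv.
have wt0 : forall j a, 0 <= wt j a.
  move=> j a; have [v [[Hv _] Hv2]] := Hstat j; by rewrite /wt Hv2.
have wt1 : forall j, \sum_a wt j a = 1.
  move=> j; have [v [[_ Hv] Hv2]] := Hstat j; by rewrite /wt Hv2.
have Hdev : 2 * eps < \sum_a `|wt i a - w i a|.
  rewrite ltNge; apply/negP => H; apply: Hi => h; by rewrite Hs.
have e1 : eps < 1.
  have : \sum_a `|wt i a - w i a| <= \sum_a (wt i a + w i a).
    apply: ler_sum => a _; apply: le_trans (ler_normB _ _) _.
    by rewrite !ger0_norm.
  by rewrite big_split /= wt1 (Hw i).2 => H; lra.
set rho := \sum_a Num.sqrt (wt i a * w i a).
have r0 : 0 <= rho by apply: sumr_ge0 => a _; apply: sqrtr_ge0.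
have r1 : rho <= 1 - eps ^+ 2 / 2.
  have := @rho_bound R K (fun a => wt i a) (fun a => w i a) eps (wt0 i) w0 (wt1 i) (Hw i).2 e0 Hdev.
  by [].  
set c := N%:R / gamma.
have c1 : 1 <= c.
  rewrite /c ler_pdivlMr // mul1r; apply: le_trans (ltW g1) _; by rewrite ler1n.
have prob0 : forall t, (0 <= (prob_tau_gt s w gamma t)%:E)%E.
  move=> t; rewrite lee_fin; apply: sumr_ge0 => h _; case: ifP => // _.
  by rewrite (@hist_stat R N K wt s Hs); apply: prodr_ge0 => q _; apply: prodr_ge0.
set B := 4 * ln c / eps ^+ 2 + 128 * (K ^ 2)%N%:R / eps ^+ 4 + 1 + 4 / eps ^+ 2.
apply: (@le_trans _ _ B%:E).
  rewrite /expected_tau; apply: lime_le.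
    by apply: is_cvg_nneseries => n _ _; apply: prob0.
  apply: nearW => T; rewrite sumEFin lee_fin big_mkord.
  apply: (@tail_bound R (fun t => prob_tau_gt s w gamma t) c rho eps K e0 e1 c1 r0 r1).
    by move=> t; apply: (@prob_le1 R N K w wt wt0 wt1 s Hs).
  by move=> t t0; apply: (@prob_le_rho R N K w wt i K0 wpos wt0 wt1 s Hs gamma t g0 N0 t0).
rewrite lee_fin /B /c div1r.
have Npos : (N%:R : R) \in Num.pos by rewrite posrE ltr0n.
have gpos : gamma^-1 \in Num.pos by rewrite posrE invr_gt0.
rewrite lnM //.
have lN0 : 0 <= ln (N%:R : R) by apply: ln_ge0; rewrite ler1n.
have L0 : 0 <= ln gamma^-1 by apply: ln_ge0; apply: ltW; rewrite invf_gt1.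
rewrite /C ger0_norm //.
have W0 := normr_ge0 (ln (wmin w)).
have e2 : 0 < eps ^+ 2 by apply: exprn_gt0.
have e5 : 0 < eps ^+ 5 by apply: exprn_gt0.
have e4 : 0 < eps ^+ 4 by apply: exprn_gt0.
have d25 : (eps ^+ 2)^-1 <= (eps ^+ 5)^-1.
  rewrite lef_pV2 ?posrE // (_ : 5%N = 2 + 3)%N // exprD.
  by rewrite -[X in _ <= X]mulr1 ler_wpM2l ?(ltW e2) // exprn_ile1 // ?(ltW e0) ?(ltW e1).
have d45 : (eps ^+ 4)^-1 <= (eps ^+ 5)^-1.
  rewrite lef_pV2 ?posrE // (_ : 5%N = 4 + 1)%N // exprD expr1.
  by rewrite -[X in _ <= X]mulr1 ler_wpM2l ?(ltW e4) // ?(ltW e1).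
have d15 : 1 <= (eps ^+ 5)^-1.
  by rewrite invf_ge1 // exprn_ile1 // ?(ltW e0) ?(ltW e1).
have k0 : 0 <= (K ^ 2)%N%:R :> R by apply: ler0n.
have d20 : 0 <= (eps ^+ 2)^-1 by rewrite invr_ge0 ltW.
move: d20 d25 d45 d15 k0 W0 L0 lN0.
move: (eps ^+ 2)^-1 (eps ^+ 4)^-1 (eps ^+ 5)^-1 ((K ^ 2)%N%:R : R) `|ln (wmin w)| (ln gamma^-1) (ln (N%:R : R)).
move=> d2 d4 d5 k W L lN d20 d25 d45 d15 k0 W0 L0 lN0.
have f1 : lN * d2 <= lN * d5 by apply: ler_wpM2l.
have f2 : k * d4 <= k * d5 by apply: ler_wpM2l.
have f3 : 0 <= L * d2 by apply: mulr_ge0.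
have f4 : 0 <= (4 * lN + 128 * k + 5) * W * d5.
  by rewrite !mulr_ge0 //; [lra | lra].
nra.
Qed.
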